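(* Let $\mathit{VI}$ be a finite set of variables with $\#\mathit{VI}=n$ and let $1\le k\le n$. For each $sh_1,sh_2\in\mathit{SH}$, if $\rho_{\mathit{TSD}_k}(sh_1)\ne\rho_{\mathit{TSD}_k}(sh_2)$ then there exist $\sigma\in\mathit{Subst}$ and $j\in\{1,\dots,k\}$ such that $\rho_{\mathit{TS}_j}(\mathrm{amgu}(sh_1,\sigma))\ne\rho_{\mathit{TS}_j}(\mathrm{amgu}(sh_2,\sigma))$.
   Context: $\mathit{SG}=\wp(\mathit{VI})\setminus\{\emptyset\}$ and $\mathit{SH}=\wp(\mathit{SG})$. $\rho_{\mathit{TSD}_k}(sh)=\{\,S\in\mathit{SG}\mid \forall T\subseteq S:\ \#T<k\implies S=\bigcup\{U\in sh\mid T\subseteq U\subseteq S\}\,\}$. For $S\in\mathit{SG}$, $\mathrm{tuples}_j(S)=\{T\subseteq S\mid\#T=j\}$, $\mathrm{tuples}_j(sh)=\bigcup_{S'\in sh}\mathrm{tuples}_j(S')$, and $\rho_{\mathit{TS}_j}(sh)=\{S\in\mathit{SG}\mid\mathrm{tuples}_j(S)\subseteq\mathrm{tuples}_j(sh)\}$. Terms are first-order terms (ground terms exist); $\mathrm{vars}(t)$ is the set of variables of $t$. $\mathit{Subst}$ is the set of idempotent substitutions (finite sets of bindings $x\mapsto t$, $t\ne x$), with variables in $\mathit{VI}$. $\mathrm{bin}(sh_1,sh_2)=\{S_1\cup S_2\mid S_i\in sh_i\}$; $sh^\star=\{S\in\mathit{SG}\mid\exists sh'\subseteq sh: S=\bigcup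 sh'\}$; $\mathrm{rel}(V,sh)=\{S\in sh\mid S\cap V\ne\emptyset\}$; with $v_x=\{x\}$, $v_t=\mathrm{vars}(t)$, $v_{xt}=v_x\cup v_t$: $\mathrm{amgu}(sh,x\mapsto t)=(sh\setminus\mathrm{rel}(v_{xt},sh))\cup\mathrm{bin}(\mathrm{rel}(v_x,sh)^\star,\mathrm{rel}(v_t,sh)^\star)$; $\mathrm{amgu}(sh,\emptyset)=sh$ and $\mathrm{amgu}(sh,\{x\mapsto t\}\cup\sigma)=\mathrm{amgu}(\mathrm{amgu}(sh,x\mapsto t),\sigma\setminus\{x\mapsto t\})$. *)

(* Defs.v *)
From Stdlib Require Import List.
From mathcomp Require Import all_boot.
Set Implicit Arguments. Unset Strict Implicit. Unset Printing Implicit Defensive.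

Section Sharing.
Variable V : finType.

(* first-order terms: variables, and function symbols (named by nat) of any arity;
   ground terms exist, e.g. Fn 0 [::] *)
Inductive term : Type :=
| Var of V
| Fn of nat & seq term.

Fixpoint vars (t : term) : {set V} :=
  match t with
  | Var x => [set x]
  | Fn _ ts =>
      (fix vs (l : seq term) : {set V} :=
         match l with [::] => set0 | u :: l' => vars u :|: vs l' end) ts
  end.

Definition tuples (j : nat) (S : {set V}) : {set {set V}} :=
  [set T : {set V} | (T \subset S) && (#|T| == j)].
Definition tuples_sh (j : nat) (sh : {set {set V}}) : {set {set V}} :=
  \bigcup_(S' in sh) tuples j S'.

Definition rhoTS (j : nat) (sh : {set {set V}}) : {set {set V}} :=
  [set S : {set V} | (S != set0) && (tuples j S \subset tuples_sh j sh)].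

Definition rhoTSD (k : nat) (sh : {set {set V}}) : {set {set V}} :=
  [set S : {set V} | (S != set0) &&
     [forall T : {set V}, ((T \subset S) && (#|T| < k)) ==>
        (S == \bigcup_(U in sh | (T \subset U) && (U \subset S)) U)]].

Definition isSH (sh : {set {set V}}) : bool := set0 \notin sh.

Definition rel (W : {set V}) (sh : {set {set V}}) : {set {set V}} :=
  [set S in sh | ~~ [disjoint S & W]].

Definition bin (sh1 sh2 : {set {set V}}) : {set {set V}} :=
  [set S1 :|: S2 | S1 in sh1, S2 in sh2].

Definition star (sh : {set {set V}}) : {set {set V}} :=
  [set S : {set V} | (S != set0) &&
     [exists sh' : {set {set V}}, (sh' \subset sh) && (S == \bigcup_(U in sh') U)]].

Definition amgu1 (sh : {set {set V}}) (x : V) (t : term) : {set {set V}} :=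
  (sh :\: rel (x |: vars t) sh) :|: bin (star (rel [set x] sh)) (star (rel (vars t) sh)).

(* A substitution is represented by the list of its bindings (x, t). *)
Definition amgu (sh : {set {set V}}) (sigma : seq (V * term)) : {set {set V}} :=
  foldl (fun s b => amgu1 s b.1 b.2) sh sigma.

(* sigma is an idempotent substitution: each variable bound at most once,
   no trivial binding x |-> x, and no bound variable occurs in any bound term *)
Definition is_subst (sigma : seq (V * term)) : Prop :=
  uniq (map fst sigma) /\
  (forall b, List.In b sigma -> b.2 <> Var b.1) /\
  (forall b c, List.In b sigma -> List.In c sigma -> b.1 \notin vars c.2).

End Sharing.

(* Main.v *)
Require Import Defs.
From mathcomp Require Import all_boot.

Section Proofs.
Variable V : finType.

Lemma amgu1_ground (sh : {set {set V}}) x :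
  amgu1 sh x (@Fn V 0 [::]) = [set U in sh | x \notin U].
Proof.
apply/setP => U; rewrite /amgu1 /=.
rewrite (setU0 [set x]) in_setU.
have -> : (U \in bin (star (Defs.rel [set x] sh)) (star (Defs.rel set0 sh))) = false.
  apply/negP => /imset2P [S1 S2 _ HS2 _].
  move: HS2; rewrite inE => /andP [HS2 /existsP [sh' /andP [Hsub /eqP HS]]].
  have Hsh0 : sh' = set0.
    apply/setP => W; rewrite inE; apply/negP => HW.
    move/subsetP: Hsub => /(_ W HW); rewrite !inE => /andP [_].
    by move=> /negP; apply; apply/pred0P => y; rewrite !inE andbF.
  by move: HS2; rewrite HS Hsh0 big_set0 eqxx.
rewrite orbF !inE disjoint_sym disjoints1 negbK.
by case: (U \in sh); rewrite ?andbT ?andbF.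
Qed.

Lemma amgu_ground (l : seq V) sh :
  amgu sh [seq (x, @Fn V 0 [::]) | x <- l] = [set U in sh | all (fun x => x \notin U) l].
Proof.
elim: l sh => [|x l IH] sh /=.
  by apply/setP => U; rewrite inE andbT.
rewrite /amgu /= -/(amgu _ _) IH amgu1_ground.
by apply/setP => U; rewrite !inE andbA.
Qed.

Lemma ground_subset (S : {set V}) sh :
  amgu sh [seq (x, @Fn V 0 [::]) | x <- enum (~: S)] = [set U in sh | U \subset S].
Proof.
rewrite amgu_ground; apply/setP => U; rewrite !inE; congr (_ && _).
apply/allP/subsetP => H.
  move=> y Hy; apply/negPn/negP => Hn.
  have : y \in enum (~: S) by rewrite mem_enum inE.
  by move/H; rewrite Hy.
move=> y; rewrite mem_enum inE => Hy; apply/negP => /H; by rewrite (negbTE Hy).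
Qed.

Lemma rhoTS_card (W S : {set V}) (sh : {set {set V}}) :
  W != set0 ->
  (W \in rhoTS #|W| [set U in sh | U \subset S]) =
  [exists U, [&& U \in sh, U \subset S & W \subset U]].
Proof.
move=> HW; rewrite inE HW /=.
apply/subsetP/existsP.
  move=> H.
  have : W \in tuples #|W| W by rewrite inE subxx eqxx.
  move/H => /bigcupP [U]; rewrite !inE => /andP [HU HUS] /andP [HWU _].
  by exists U; rewrite HU HUS HWU.
move=> [U /and3P [HU HUS HWU]] T; rewrite inE => /andP [HTW /eqP HT].
have HTeq : T = W by apply/eqP; rewrite eqEcard HTW HT leqnn.
subst T; apply/bigcupP; exists U; first by rewrite inE HU HUS.
by rewrite inE HWU eqxx.
Qed.

Lemma main_dir (k : nat) (sh1 sh2 : {set {set V}}) (S : {set V}) :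
  S \in rhoTSD k sh1 -> S \notin rhoTSD k sh2 ->
  exists sigma : seq (V * term V), is_subst sigma /\
    exists j : nat, 1 <= j <= k /\
      rhoTS j (amgu sh1 sigma) != rhoTS j (amgu sh2 sigma).
Proof.
rewrite !inE => /andP [HS0 /forallP H1].
rewrite HS0 /= => /forallPn [T]; rewrite negb_imply => /andP [/andP [HTS HTk] HneqS].
have := H1 T; rewrite HTS HTk /= => /eqP HS1.
set B2 := \bigcup_(U in sh2 | _) U in HneqS.
have HB2S : B2 \subset S.
  by apply/bigcupsP => U /andP [_ /andP [_ ->]].
have [v HvS HvB] : exists2 v, v \in S & v \notin B2.
  apply/subsetPn; apply/negP => Hsub.
  by move/negP: HneqS; apply; rewrite eqEsubset Hsub HB2S.
have := HvS; rewrite HS1 => /bigcupP [U1 /andP [HU1 /andP [HTU1 HU1S]] HvU1].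
set W := v |: T.
have HW0 : W != set0 by apply/set0Pn; exists v; rewrite !inE eqxx.
exists [seq (x, @Fn V 0 [::]) | x <- enum (~: S)]; split.
  split; first by rewrite -map_comp map_id enum_uniq.
  split.
    move=> b /List.in_map_iff [x [<- _]] //.
  move=> b c _ /List.in_map_iff [x [<- _]] /=; by rewrite inE.
exists #|W|; split.
  apply/andP; split; first by rewrite card_gt0.
  have := cardsU1 v T; rewrite -/W => Hc.
  rewrite Hc; case: (v \notin T) => /=; first by rewrite add1n.
  by rewrite add0n ltnW.
apply/negP => /eqP Heq.
have H1W : W \in rhoTS #|W| (amgu sh1 [seq (x, @Fn V 0 [::]) | x <- enum (~: S)]).
  rewrite ground_subset rhoTS_card //; apply/existsP; exists U1.
  by rewrite HU1 HU1S /W subUset sub1set HvU1 HTU1.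
move: H1W; rewrite Heq ground_subset rhoTS_card // => /existsP [U /and3P [HU HUS HWU]].
move/negP: HvB; apply; apply/bigcupP; exists U.
  by rewrite HU HUS (subset_trans _ HWU) // subsetUr.
by apply: (subsetP HWU); rewrite !inE eqxx.
Qed.

End Proofs.

Theorem theorem3p17 (V : finType) (n k : nat) (sh1 sh2 : {set {set V}}) :
  #|V| = n -> 1 <= k <= n ->
  isSH sh1 -> isSH sh2 ->
  rhoTSD k sh1 != rhoTSD k sh2 ->
  exists sigma : seq (V * term V), is_subst sigma /\
    exists j : nat, 1 <= j <= k /\
      rhoTS j (amgu sh1 sigma) != rhoTS j (amgu sh2 sigma).
Proof.
move=> _ _ _ _ Hne.
have [S HS] : exists S, (S \in rhoTSD k sh1) != (S \in rhoTSD k sh2).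
  case: (pickP (fun S => (S \in rhoTSD k sh1) != (S \in rhoTSD k sh2))) => [S HS|H].
    by exists S.
  move/eqP: Hne; case; apply/setP => S; have := H S; by move/negbFE/eqP.
case H1: (S \in rhoTSD k sh1) HS; case H2: (S \in rhoTSD k sh2) => // _.
  by apply: (@main_dir V k sh1 sh2 S); rewrite ?H1 ?H2.
have [sigma [Hs [j [Hj Hn]]]] := @main_dir V k sh2 sh1 S H2 (negbT H1).
by exists sigma; split => //; exists j; split => //; rewrite eq_sym.
Qed.
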